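(* Let $\tau$ be a relational vocabulary all of whose symbols have arity at most $2$. Then $\mathrm{UF}_1^=(\tau)\leq\mathrm{FOC}^2(\tau)$. Moreover, if $\tau$ contains a binary relation symbol, then $\mathrm{FOC}^2(\tau)\not\leq\mathrm{UF}_1^=(\tau)$, so the inclusion is strict.
   Context: Vocabularies are relational (relation symbols of positive finite arities, no constants or function symbols). A $k$-ary $\tau$-atom is an atomic formula (a relational atom $R(z_1,\dots,z_m)$ with $R\in\tau$, or an equality $z=z'$) having exactly $k$ distinct free variables. For a finite set $V$ of variables, a $V$-uniform set is a finite set of relational (non-equality) $\tau$-atoms $R(z_1,\dots,z_m)$ with $\{z_1,\dots,z_m\}=V$. The set $\mathrm{UF}_1^=(\tau)$ is the smallest set $\mathcal F$ such that: (1) every unary $\tau$-atom, and $\bot,\top$, are in $\mathcal F$; (2) every equality $x=y$ is in $\mathcal F$; (3) $\mathcal F$ is closed under $\neg$ and $\wedge$; (4) if $X=\{x_0,\dots,x_k\}$ is a finite set of variables, $U$ a finite set of formulas of $\mathcal F$ with free variables in $X$, $V\subseteq X$, $F$ a $V$-uniform set of $\tau$-atoms, and $\varphi$ a Boolean combination of formulas in $U\cup F$, then $\exists x_1\dots\exists x_k\,\varphi\in\mathcal F$ and $\exists x_0\dots\exists x_k\,\varphi\in\mathcal F$. $\forall$ and other connectives are abbreviations. $\mathrm{FOC}^2(\tau)$ is the set of first-order $\tau$-formulas with equality, extended by counting quantifiers $\exists^{\geq k}$ ($k$ a positive integer), that use only two variable symbols. For sets of formulas $\mathcal L,\mathcal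 L'$, $\mathcal L\leq\mathcal L'$ means every sentence of $\mathcal L$ is equivalent to some sentence of $\mathcal L'$. *)

(* Defs.v *)
From mathcomp Require Import all_boot.
From Stdlib Require List.
Set Implicit Arguments. Unset Strict Implicit. Unset Printing Implicit Defensive.

Section Syntax.
Variables (S : Type) (ar : S -> nat).

Inductive form : Type :=
| FBot : form
| FTop : form
| FAtom (R : S) (args : 'I_(ar R) -> nat) : form
| FEq (x y : nat) : form
| FNeg (f : form) : form
| FAnd (f g : form) : form
| FEx (x : nat) (f : form) : form
| FCnt (k : nat) (x : nat) (f : form) : form.

Definition atom_vars (R : S) (args : 'I_(ar R) -> nat) : seq nat :=
  map args (enum 'I_(ar R)).

Fixpoint fv (f : form) : seq nat :=
  match f with
  | FBot | FTop => [::]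
  | FAtom R args => atom_vars args
  | FEq x y => [:: x; y]
  | FNeg g => fv g
  | FAnd g h => fv g ++ fv h
  | FEx x g => [seq z <- fv g | z != x]
  | FCnt _ x g => [seq z <- fv g | z != x]
  end.

Definition sentence (f : form) : Prop := fv f = [::].

Fixpoint allvars (f : form) : seq nat :=
  match f with
  | FBot | FTop => [::]
  | FAtom R args => atom_vars args
  | FEq x y => [:: x; y]
  | FNeg g => allvars g
  | FAnd g h => allvars g ++ allvars h
  | FEx x g => x :: allvars g
  | FCnt _ x g => x :: allvars g
  end.

Fixpoint cnt_ok (f : form) : Prop :=
  match f with
  | FBot | FTop | FAtom _ _ | FEq _ _ => True
  | FNeg g => cnt_ok g
  | FAnd g h => cnt_ok g /\ cnt_ok h
  | FEx _ g => cnt_ok g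
  | FCnt k _ g => 0 < k /\ cnt_ok g
  end.

Definition FOC2 (f : form) : Prop :=
  (exists a b : nat, {subset allvars f <= [:: a; b]}) /\ cnt_ok f.

Definition upd (D : Type) (e : nat -> D) (x : nat) (d : D) : nat -> D :=
  fun z => if z == x then d else e z.

Fixpoint sat (D : Type) (I : forall R : S, ('I_(ar R) -> D) -> Prop)
  (e : nat -> D) (f : form) : Prop :=
  match f with
  | FBot => False
  | FTop => True
  | FAtom R args => I R (fun i => e (args i))
  | FEq x y => e x = e y
  | FNeg g => ~ sat I e g
  | FAnd g h => sat I e g /\ sat I e h
  | FEx x g => exists d : D, sat I (upd e x d) g
  | FCnt k x g => exists h : 'I_k -> D,
                    injective h /\ forall i, sat I (upd e x (h i)) g
  end.

(* logical equivalence over all tau-structures (an environment e exists only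
   for nonempty domains) *)
Definition equiv (f g : form) : Prop :=
  forall (D : Type) (I : forall R : S, ('I_(ar R) -> D) -> Prop) (e : nat -> D),
    sat I e f <-> sat I e g.

Definition le_logic (L L' : form -> Prop) : Prop :=
  forall f, L f -> sentence f -> exists g, L' g /\ sentence g /\ equiv f g.

Inductive BoolComb (P : form -> Prop) : form -> Prop :=
| bc_base f : P f -> BoolComb P f
| bc_neg f : BoolComb P f -> BoolComb P (FNeg f)
| bc_and f g : BoolComb P f -> BoolComb P g -> BoolComb P (FAnd f g).

Definition uniform_atom (V : seq nat) (a : form) : Prop :=
  exists R (args : 'I_(ar R) -> nat),
    a = FAtom args /\ forall z, (z \in atom_vars args) = (z \in V).

Definition exs (xs : seq nat) (phi : form) : form := foldr FEx phi xs.

Inductive UF1eq : form -> Prop :=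
| uf_bot : UF1eq FBot
| uf_top : UF1eq FTop
| uf_unary R (args : 'I_(ar R) -> nat) :
    (exists x, forall z, z \in atom_vars args <-> z = x) -> UF1eq (FAtom args)
| uf_eq x y : UF1eq (FEq x y)
| uf_neg f : UF1eq f -> UF1eq (FNeg f)
| uf_and f g : UF1eq f -> UF1eq g -> UF1eq (FAnd f g)
| uf_ex (x0 : nat) (xs : seq nat) (U : seq form) (V : seq nat) (F : seq form)
    (phi : form) :
    uniq (x0 :: xs) ->
    (forall u, List.In u U -> UF1eq u /\ {subset fv u <= x0 :: xs}) ->
    {subset V <= x0 :: xs} ->
    (forall a, List.In a F -> uniform_atom V a) ->
    BoolComb (fun g => List.In g U \/ List.In g F) phi ->
    UF1eq (exs xs phi)
| uf_ex0 (x0 : nat) (xs : seq nat) (U : seq form) (V : seq nat) (F : seq form)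
    (phi : form) :
    uniq (x0 :: xs) ->
    (forall u, List.In u U -> UF1eq u /\ {subset fv u <= x0 :: xs}) ->
    {subset V <= x0 :: xs} ->
    (forall a, List.In a F -> uniform_atom V a) ->
    BoolComb (fun g => List.In g U \/ List.In g F) phi ->
    UF1eq (exs (x0 :: xs) phi).

End Syntax.

(* Main.v *)
Require Import Defs.
From mathcomp Require Import all_boot.
From Stdlib Require Import FunctionalExtensionality Classical ClassicalEpsilon ZArith Lia.
From Stdlib Require List.
Set Implicit Arguments. Unset Strict Implicit. Unset Printing Implicit Defensive.

Section Basic.
Variables (S : Type) (ar : S -> nat).
Implicit Types (f g : form ar).

Lemma sat_ext D (I : forall R, ('I_(ar R) -> D) -> Prop) f :
  forall e e', (forall z, e z = e' z) -> (sat I e f <-> sat I e' f).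
Proof.
elim: f => [||R args|x y|g IH|g IHg h IHh|x g IH|k x g IH] e e' H /=; try tauto.
- by have -> : (fun i => e (args i)) = (fun i => e' (args i))
    by apply: functional_extensionality => i; rewrite H.
- by rewrite !H.
- by rewrite (IH e e').
- by rewrite (IHg e e') // (IHh e e').
- have E d : sat I (upd e x d) g <-> sat I (upd e' x d) g.
    by apply: IH => z; rewrite /upd; case: (z == x).
  by split=> -[d Hd]; exists d; apply/E.
- have E d : sat I (upd e x d) g <-> sat I (upd e' x d) g.
    by apply: IH => z; rewrite /upd; case: (z == x).
  by split=> -[hh [Hi Hd]]; exists hh; split=> // i; apply/E.
Qed.

Lemma sat_fv D (I : forall R, ('I_(ar R) -> D) -> Prop) f :
  forall e e', (forall z, z \in fv f -> e z = e' z) -> (sat I e f <-> sat I e' f).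
Proof.
elim: f => [||R args|x y|g IH|g IHg h IHh|x g IH|k x g IH] e e' H /=; try tauto.
- have -> // : (fun i => e (args i)) = (fun i => e' (args i)).
  apply: functional_extensionality => i; rewrite H //.
  by rewrite /= /atom_vars map_f // mem_enum.
- by rewrite (H x) ?(H y) // !inE eqxx ?orbT.
- by rewrite (IH e e').
- rewrite (IHg e e') ?(IHh e e') // => z Hz; apply: H; by rewrite mem_cat Hz ?orbT.
- have E d : sat I (upd e x d) g <-> sat I (upd e' x d) g.
    by apply: IH => z Hz; rewrite /upd; case: eqP => // /eqP zx; rewrite H // mem_filter zx.
  by split=> -[d Hd]; exists d; apply/E.
- have E d : sat I (upd e x d) g <-> sat I (upd e' x d) g.
    by apply: IH => z Hz; rewrite /upd; case: eqP => // /eqP zx; rewrite H // mem_filter zx.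
  by split=> -[hh [Hi Hd]]; exists hh; split=> // i; apply/E.
Qed.

Lemma fv_allvars f : {subset fv f <= allvars f}.
Proof.
elim: f => [||R args|x y|g IH|g IHg h IHh|x g IH|k x g IH] z //=.
- exact: IH.
- by rewrite !mem_cat => /orP[/IHg->|/IHh->]; rewrite ?orbT.
- by rewrite mem_filter inE => /andP[_ /IH ->]; rewrite orbT.
- by rewrite mem_filter inE => /andP[_ /IH ->]; rewrite orbT.
Qed.

Lemma exs_sat D (I : forall R, ('I_(ar R) -> D) -> Prop) xs phi e :
  sat I e (exs xs phi) <->
  exists e', (forall z, z \notin xs -> e' z = e z) /\ sat I e' phi.
Proof.
elim: xs e => [|x xs IH] e /=.
  split; [by exists e | move=> [e' [He Hs]]; apply/(@sat_ext _ I phi e e' (fun z => esym (He z isT))); exact: Hs].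
split.
- move=> [d /IH [e' [He Hs]]]; exists e'; split=> // z; rewrite inE negb_or => /andP[zx zxs].
  by rewrite He // /upd (negbTE zx).
- move=> [e' [He Hs]]; exists (e' x); apply/IH; exists e'; split=> // z zxs.
  rewrite /upd; case: eqP => [->//|/eqP zx]; apply: He; by rewrite inE negb_or zx.
Qed.

End Basic.


Definition rich (E : Z -> Z -> Prop) : Prop :=
  (forall x, ~ E x x) /\ (forall x y, ~ (E x y /\ E y x)) /\
  (forall b (P Q : Prop), ~ (P /\ Q) ->
     exists d, d <> b /\ (E b d <-> P) /\ (E d b <-> Q)) /\
  (forall b (P Q : Prop), ~ (P /\ Q) ->
     exists d1 d2, d1 <> d2 /\ d1 <> b /\ d2 <> b /\ (E d1 d2 <-> P) /\ (E d2 d1 <-> Q)).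

Definition code (a : Z) : Z := if (0 <=? a)%Z then (2 * a)%Z else (- 2 * a - 1)%Z.

Lemma code_inj a b : code a = code b -> a = b.
Proof. rewrite /code; case: (Z.leb_spec 0 a); case: (Z.leb_spec 0 b); lia. Qed.
Lemma code_ge0 a : (0 <= code a)%Z.
Proof. rewrite /code; case: (Z.leb_spec 0 a); lia. Qed.

Lemma hlemma E1 E2 : rich E1 -> rich E2 -> forall a0 b0 c1 c2 : Z,
  exists h : Z -> Z, injective h /\ h a0 = b0 /\
   (forall p q, (p = c1 \/ p = c2) -> (q = c1 \/ q = c2) -> (E1 p q <-> E2 (h p) (h q))).
Proof.
move=> [l1 [t1 [_ _]]] [l2 [t2 [R1 R2]]] a0 b0 c1 c2.
have [u1 [u2 [A1 [A2 [A3 [A4 [A5 [A6 [B1 B2]]]]]]]]] :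
  exists u1 u2, (c1 = a0 -> u1 = b0) /\ (c2 = a0 -> u2 = b0) /\ (c1 = c2 -> u1 = u2) /\
    (c1 <> a0 -> u1 <> b0) /\ (c2 <> a0 -> u2 <> b0) /\ (c1 <> c2 -> u1 <> u2) /\
    (E1 c1 c2 <-> E2 u1 u2) /\ (E1 c2 c1 <-> E2 u2 u1).
  case: (Z.eq_dec c1 c2) => [<-|n12].
    case: (Z.eq_dec c1 a0) => [->|n1].
      exists b0, b0; do 6 (split; [lia|]); split; split=> H; exfalso; (apply: l1 H || apply: l2 H).
    exists (b0 + 1)%Z, (b0 + 1)%Z; do 6 (split; [lia|]); split; split=> H; exfalso; (apply: l1 H || apply: l2 H).
  case: (Z.eq_dec c1 a0) => [e1|n1].
    have [d [db [D1 D2]]] := R1 b0 (E1 c1 c2) (E1 c2 c1) (t1 _ _).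
    exists b0, d; do 6 (split; [lia|]); split; tauto.
  case: (Z.eq_dec c2 a0) => [e2|n2].
    have [d [db [D1 D2]]] := R1 b0 (E1 c2 c1) (E1 c1 c2) (t1 _ _).
    exists d, b0; do 6 (split; [lia|]); split; tauto.
  have [d1 [d2 [d12 [db1 [db2 [D1 D2]]]]]] := R2 b0 (E1 c1 c2) (E1 c2 c1) (t1 _ _).
  exists d1, d2; do 6 (split; [lia|]); split; tauto.
pose h a := if Z.eq_dec a a0 then b0 else if Z.eq_dec a c1 then u1
            else if Z.eq_dec a c2 then u2 else (Z.abs b0 + Z.abs u1 + Z.abs u2 + 1 + code a)%Z.
have hc1 : h c1 = u1.
  rewrite /h; destruct (Z.eq_dec c1 a0) as [?|?]; first by rewrite A1.
  by destruct (Z.eq_dec c1 c1).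
have hc2 : h c2 = u2.
  rewrite /h; destruct (Z.eq_dec c2 a0) as [?|n2]; first by rewrite A2.
  destruct (Z.eq_dec c2 c1) as [?|?]; [by rewrite A3 | by destruct (Z.eq_dec c2 c2)].
have ha0 : h a0 = b0 by rewrite /h; destruct (Z.eq_dec a0 a0).
have hfr : forall x, x <> a0 -> x <> c1 -> x <> c2 ->
   h x = (Z.abs b0 + Z.abs u1 + Z.abs u2 + 1 + code x)%Z.
  move=> x n1 n2 n3; rewrite /h.
  by destruct (Z.eq_dec x a0); destruct (Z.eq_dec x c1); destruct (Z.eq_dec x c2).
have big : forall x, let v := (Z.abs b0 + Z.abs u1 + Z.abs u2 + 1 + code x)%Z in
   v <> b0 /\ v <> u1 /\ v <> u2.
  move=> x /=; have := @code_ge0 x; lia.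
clearbody h.
have cls : forall x, x = a0 \/ x = c1 \/ x = c2 \/ (x <> a0 /\ x <> c1 /\ x <> c2).
  move=> x; destruct (Z.eq_dec x a0); destruct (Z.eq_dec x c1); destruct (Z.eq_dec x c2); tauto.
exists h; split; last split => //.
- clear R1 R2 B1 B2 l1 t1 l2 t2.
  move=> x y Hxy.
  have [Ex|[Ex|[Ex|[n1 [n2 n3]]]]] := cls x; have [Ey|[Ey|[Ey|[m1 [m2 m3]]]]] := cls y.
  - rewrite Ex ha0 in Hxy; rewrite Ex; rewrite Ey ha0 in Hxy; rewrite Ey; apply: NNPP => nn; first [by case: nn|idtac]; first [ (apply: A4; first [congruence | move=> ?; congruence]) | (apply: A5; first [congruence | move=> ?; congruence]) | (apply: A6; first [congruence | move=> ?; congruence])].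
  - rewrite Ex ha0 in Hxy; rewrite Ex; rewrite Ey hc1 in Hxy; rewrite Ey; apply: NNPP => nn; first [by case: nn|idtac]; first [ (apply: A4; first [congruence | move=> ?; congruence]) | (apply: A5; first [congruence | move=> ?; congruence]) | (apply: A6; first [congruence | move=> ?; congruence])].
  - rewrite Ex ha0 in Hxy; rewrite Ex; rewrite Ey hc2 in Hxy; rewrite Ey; apply: NNPP => nn; first [by case: nn|idtac]; first [ (apply: A4; first [congruence | move=> ?; congruence]) | (apply: A5; first [congruence | move=> ?; congruence]) | (apply: A6; first [congruence | move=> ?; congruence])].
  - rewrite Ex ha0 in Hxy; rewrite Ex; rewrite (@hfr y m1 m2 m3) in Hxy; exfalso; case: (big y) => /= ? [? ?]; congruence.
  - rewrite Ex hc1 in Hxy; rewrite Ex; rewrite Ey ha0 in Hxy; rewrite Ey; apply: NNPP => nn; first [by case: nn|idtac]; first [ (apply: A4; first [congruence | move=> ?; congruence]) | (apply: A5; first [congruence | move=> ?; congruence]) | (apply: A6; first [congruence | move=> ?; congruence])].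
  - rewrite Ex hc1 in Hxy; rewrite Ex; rewrite Ey hc1 in Hxy; rewrite Ey; apply: NNPP => nn; first [by case: nn|idtac]; first [ (apply: A4; first [congruence | move=> ?; congruence]) | (apply: A5; first [congruence | move=> ?; congruence]) | (apply: A6; first [congruence | move=> ?; congruence])].
  - rewrite Ex hc1 in Hxy; rewrite Ex; rewrite Ey hc2 in Hxy; rewrite Ey; apply: NNPP => nn; first [by case: nn|idtac]; first [ (apply: A4; first [congruence | move=> ?; congruence]) | (apply: A5; first [congruence | move=> ?; congruence]) | (apply: A6; first [congruence | move=> ?; congruence])].
  - rewrite Ex hc1 in Hxy; rewrite Ex; rewrite (@hfr y m1 m2 m3) in Hxy; exfalso; case: (big y) => /= ? [? ?]; congruence.
  - rewrite Ex hc2 in Hxy; rewrite Ex; rewrite Ey ha0 in Hxy; rewrite Ey; apply: NNPP => nn; first [by case: nn|idtac]; first [ (apply: A4; first [congruence | move=> ?; congruence]) | (apply: A5; first [congruence | move=> ?; congruence]) | (apply: A6; first [congruence | move=> ?; congruence])].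
  - rewrite Ex hc2 in Hxy; rewrite Ex; rewrite Ey hc1 in Hxy; rewrite Ey; apply: NNPP => nn; first [by case: nn|idtac]; first [ (apply: A4; first [congruence | move=> ?; congruence]) | (apply: A5; first [congruence | move=> ?; congruence]) | (apply: A6; first [congruence | move=> ?; congruence])].
  - rewrite Ex hc2 in Hxy; rewrite Ex; rewrite Ey hc2 in Hxy; rewrite Ey; apply: NNPP => nn; first [by case: nn|idtac]; first [ (apply: A4; first [congruence | move=> ?; congruence]) | (apply: A5; first [congruence | move=> ?; congruence]) | (apply: A6; first [congruence | move=> ?; congruence])].
  - rewrite Ex hc2 in Hxy; rewrite Ex; rewrite (@hfr y m1 m2 m3) in Hxy; exfalso; case: (big y) => /= ? [? ?]; congruence.
  - rewrite (@hfr x n1 n2 n3) in Hxy; rewrite Ey ha0 in Hxy; rewrite Ey; exfalso; case: (big x) => /= ? [? ?]; congruence.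
  - rewrite (@hfr x n1 n2 n3) in Hxy; rewrite Ey hc1 in Hxy; rewrite Ey; exfalso; case: (big x) => /= ? [? ?]; congruence.
  - rewrite (@hfr x n1 n2 n3) in Hxy; rewrite Ey hc2 in Hxy; rewrite Ey; exfalso; case: (big x) => /= ? [? ?]; congruence.
  - rewrite (@hfr x n1 n2 n3) in Hxy; rewrite (@hfr y m1 m2 m3) in Hxy; apply: code_inj; exact: (Z.add_reg_l _ _ _ Hxy).
- move=> p q [->|->] [->|->]; rewrite ?hc1 ?hc2 //;
    split=> H; exfalso; (apply: l1 H || apply: l2 H).
Qed.

Section Inv.
Variables (S : Type) (ar : S -> nat).
Hypothesis ar_le2 : forall R : S, ar R <= 2.

Definition Istr (E : Z -> Z -> Prop) : forall R : S, ('I_(ar R) -> Z) -> Prop :=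
  fun R a => exists i j : 'I_(ar R), val i = 0 /\ val j = 1 /\ E (a i) (a j).

Definition Good (f : form ar) : Prop :=
  forall E1 E2, rich E1 -> rich E2 -> forall e1 e2 : nat -> Z,
   (forall u v, u \in fv f -> v \in fv f -> (e1 u = e1 v <-> e2 u = e2 v)) ->
   (sat (Istr E1) e1 f <-> sat (Istr E2) e2 f).

Lemma bc_iff (P : form ar -> Prop) phi (H : BoolComb P phi) D1 D2
  (I1 : forall R, ('I_(ar R) -> D1) -> Prop) (I2 : forall R, ('I_(ar R) -> D2) -> Prop) e1 e2 :
  (forall g, P g -> (sat I1 e1 g <-> sat I2 e2 g)) -> (sat I1 e1 phi <-> sat I2 e2 phi).
Proof.
move=> HP; elim: H => [g /HP //|g _ IH|g h _ IHg _ IHh] /=; [tauto | by rewrite IHg IHh].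
Qed.

Lemma W_exists x0 (xs : seq nat) V (F : seq (form ar)) :
  {subset V <= x0 :: xs} -> (forall a, List.In a F -> uniform_atom V a) ->
  exists w1 w2, w1 \in x0 :: xs /\ w2 \in x0 :: xs /\
   forall a, List.In a F -> exists R (args : 'I_(ar R) -> nat),
      a = FAtom args /\ forall i, args i = w1 \/ args i = w2.
Proof.
move=> HV HF; case: F HF => [|a0 F] HF.
  by exists x0, x0; rewrite !inE eqxx; split=> //; split=> // a [].
have [R0 [args0 [_ Hu0]]] := HF a0 (or_introl erefl).
set s := atom_vars args0.
have ss : size s <= 2 by rewrite /s /atom_vars size_map size_enum_ord ar_le2.
have ins k : nth x0 s k \in x0 :: xs.
  case: (ltnP k (size s)) => hk; last by rewrite nth_default // inE eqxx.
  by apply: HV; rewrite -Hu0 mem_nth.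
exists (nth x0 s 0), (nth x0 s 1); split; first exact: ins; split; first exact: ins.
move=> a Ha; have [R [args [-> Hu]]] := HF a Ha; exists R, args; split=> // i.
have : args i \in s.
  by rewrite /s Hu0 -Hu /atom_vars map_f // mem_enum.
move=> Hi; rewrite -(nth_index x0 Hi).
have := index_mem (args i) s; rewrite Hi => /(leq_trans)/(_ ss).
by case: (index (args i) s) => [|[|k]] //; [left|right].
Qed.

Lemma core E1 E2 : rich E1 -> rich E2 ->
  forall x0 xs (U : seq (form ar)) V F phi,
  x0 \notin xs ->
  (forall u, List.In u U -> Good u /\ {subset fv u <= x0 :: xs}) ->
  {subset V <= x0 :: xs} ->
  (forall a, List.In a F -> uniform_atom V a) ->
  BoolComb (fun g => List.In g U \/ List.In g F) phi ->
  forall e1 e2, sat (Istr E1) e1 (exs xs phi) -> sat (Istr E2) e2 (exs xs phi).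
Proof.
move=> r1 r2 x0 xs U V F phi nx HU HV HF Hbc e1 e2 /exs_sat [e1' [Ha1 Hs1]].
have [w1 [w2 [iw1 [iw2 HW]]]] := W_exists HV HF.
have [h [hinj [ha0 hpair]]] := hlemma r1 r2 (e1 x0) (e2 x0) (e1' w1) (e1' w2).
pose e2' v := if v \in xs then h (e1' v) else e2 v.
have Hkey : forall v, v \in x0 :: xs -> e2' v = h (e1' v).
  move=> v; rewrite inE => /orP[/eqP->|vx]; last by rewrite /e2' vx.
  by rewrite /e2' (negbTE nx) Ha1.
apply/exs_sat; exists e2'; split; first by move=> z /negbTE zx; rewrite /e2' zx.
suff Hiff : sat (Istr E1) e1' phi <-> sat (Istr E2) e2' phi by apply/Hiff.
apply: (bc_iff Hbc) => g [gU|gF].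
- have [Gg Hfv] := HU g gU; apply: Gg => // u v Hu Hv.
  rewrite !Hkey ?Hfv //; split=> [->//|]; exact: hinj.
- have [R [args [-> Hargs]]] := HW g gF => /=.
  have Hin i : args i \in x0 :: xs by case: (Hargs i) => ->.
  have Hp i : e1' (args i) = e1' w1 \/ e1' (args i) = e1' w2 by case: (Hargs i) => ->; [left|right].
  split=> -[i [j [vi [vj HE]]]]; exists i, j; do 2 (split=> //).
  + by rewrite !Hkey // -hpair.
  + by move: HE; rewrite !Hkey // -hpair.
Qed.

Lemma unary_false (E : Z -> Z -> Prop) (R : S) (args : 'I_(ar R) -> nat) e :
  (forall x, ~ E x x) ->
  (exists x, forall z, z \in atom_vars args <-> z = x) ->
  ~ sat (Istr E) e (FAtom args).
Proof.
move=> l [x Hx] [i [j [_ [_ HE]]]].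
have ai : args i = x by apply/Hx; rewrite /atom_vars map_f // mem_enum.
have aj : args j = x by apply/Hx; rewrite /atom_vars map_f // mem_enum.
by move: HE; rewrite ai aj; apply: l.
Qed.

Lemma inv_main : forall f : form ar, UF1eq f -> Good f.
Proof.
fix IH 2 => f H.
destruct H as [| |R args Hx|x y|f H|f g Hf Hg|x0 xs U V F phi Hu HU HV HF Hbc
               |x0 xs U V F phi Hu HU HV HF Hbc];
  move=> E1 E2 r1 r2 e1 e2 Hp.
- by [].
- by [].
- split=> Hs; exfalso; [exact: (@unary_false E1 R args e1 (proj1 r1) Hx Hs) | exact: (@unary_false E2 R args e2 (proj1 r2) Hx Hs)].
- by apply: Hp; rewrite !inE eqxx ?orbT.
- by rewrite /= (IH f H E1 E2 r1 r2 e1 e2 Hp).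
- rewrite /= (IH f Hf E1 E2 r1 r2 e1 e2) ?(IH g Hg E1 E2 r1 r2 e1 e2) // => u v Hu' Hv';
    by apply: Hp; rewrite mem_cat ?Hu' ?Hv' ?orbT.
- have HU' : forall u, List.In u U -> Good u /\ {subset fv u <= x0 :: xs}.
    move=> u hu; case: (HU u hu) => a b; split; [exact: (IH u a) | exact: b].
  have nx : x0 \notin xs by case/andP: Hu.
  split; [exact: (core r1 r2 nx HU' HV HF Hbc) | exact: (core r2 r1 nx HU' HV HF Hbc)].
- have HU' : forall u, List.In u U -> Good u /\ {subset fv u <= x0 :: xs}.
    move=> u hu; case: (HU u hu) => a b; split; [exact: (IH u a) | exact: b].
  have nx : x0 \notin xs by case/andP: Hu.
  split=> -[d Hd]; exists 0%Z.
  + exact: (core r1 r2 nx HU' HV HF Hbc (e1 := upd e1 x0 d) (upd e2 x0 0%Z) Hd).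
  + exact: (core r2 r1 nx HU' HV HF Hbc (e1 := upd e2 x0 d) (upd e1 x0 0%Z) Hd).
Qed.

Lemma filt01 (s : seq nat) : all (fun z => (z == 0) || (z == 1)) s ->
  [seq z <- [seq z <- s | z != 1] | z != 0] = [::].
Proof. by elim: s => //= a s IH /andP [Ha Hs]; case/orP: Ha => /eqP ->; rewrite /= IH. Qed.

Definition EA (x y : Z) : Prop := y = (x + 1)%Z \/ (x = 0%Z /\ y = 2%Z).
Definition EB (x y : Z) : Prop := y = (x + 1)%Z.

Lemma richA : rich EA.
Proof.
rewrite /rich /EA; split; [lia|split; [lia|split]].
- move=> b P Q nPQ; case: (classic P) => HP; [|case: (classic Q) => HQ].
  + exists (b + 1)%Z; split; [lia|split; split=> H; try tauto; try lia].
  + exists (b - 1)%Z; split; [lia|split; split=> H; try tauto; try lia].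
  + exists (b + 5)%Z; split; [lia|split; split=> H; try tauto; try lia].
- move=> b P Q nPQ; case: (classic P) => HP; [|case: (classic Q) => HQ].
  + exists (b + 10)%Z, (b + 11)%Z; do 3 (split; [lia|]); split; split=> H; try tauto; try lia.
  + exists (b + 11)%Z, (b + 10)%Z; do 3 (split; [lia|]); split; split=> H; try tauto; try lia.
  + exists (b + 10)%Z, (b + 20)%Z; do 3 (split; [lia|]); split; split=> H; try tauto; try lia.
Qed.

Lemma richB : rich EB.
Proof.
rewrite /rich /EB; split; [lia|split; [lia|split]].
- move=> b P Q nPQ; case: (classic P) => HP; [|case: (classic Q) => HQ].
  + exists (b + 1)%Z; split; [lia|split; split=> H; try tauto; try lia].
  + exists (b - 1)%Z; split; [lia|split; split=> H; try tauto; try lia].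
  + exists (b + 5)%Z; split; [lia|split; split=> H; try tauto; try lia].
- move=> b P Q nPQ; case: (classic P) => HP; [|case: (classic Q) => HQ].
  + exists (b + 10)%Z, (b + 11)%Z; do 3 (split; [lia|]); split; split=> H; try tauto; try lia.
  + exists (b + 11)%Z, (b + 10)%Z; do 3 (split; [lia|]); split; split=> H; try tauto; try lia.
  + exists (b + 10)%Z, (b + 20)%Z; do 3 (split; [lia|]); split; split=> H; try tauto; try lia.
Qed.

Lemma part2 : (exists R : S, ar R = 2) -> ~ le_logic (@FOC2 S ar) (@UF1eq S ar).
Proof.
case=> R0 HR Hle.
pose args : 'I_(ar R0) -> nat := fun i => if val i == 0 then 0 else 1.
pose f : form ar := FEx 0 (FCnt 2 1 (FAtom args)).
have A01 : all (fun z => (z == 0) || (z == 1)) (atom_vars args).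
  by apply/allP => z /mapP [i _ ->]; rewrite /args; case: (val i == 0).
have Hf : FOC2 f.
  split=> //; exists 0, 1 => z; rewrite /= !inE => /orP[->//|/orP[->|]]; rewrite ?orbT //.
  by move/(allP A01).
have Hs : sentence f by rewrite /sentence /= filt01.
have [g [Hg [Hgs Heq]]] := Hle f Hf Hs.
have i0 : 0 < ar R0 by rewrite HR.
have j0 : 1 < ar R0 by rewrite HR.
have satA : sat (Istr EA) (fun _ => 0%Z) f.
  exists 0%Z; exists (fun i : 'I_2 => Z.of_nat (val i + 1)); split.
    by move=> i j /Nat2Z.inj /eqP; rewrite eqn_add2r => /eqP /val_inj.
  move=> i; exists (Ordinal i0), (Ordinal j0); split=> //; split=> //.
  rewrite /upd /args /= /EA; case: i => [[|[|k]] Hk] //=; [left|right]; lia.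
have nsatB : ~ sat (Istr EB) (fun _ => 0%Z) f.
  move=> [d [h [hinj H]]].
  have Hk (k : 'I_2) : h k = (d + 1)%Z.
    have [i [j [vi [vj HE]]]] := H k.
    by move: HE; rewrite /upd /args /EB vi vj /=.
  by have := hinj ord0 (@Ordinal 2 1 isT); rewrite !Hk => /(_ erefl) /(congr1 val).
apply: nsatB; apply/Heq.
have Hpat : forall u v, u \in fv g -> v \in fv g ->
   ((fun _ : nat => 0%Z) u = (fun _ : nat => 0%Z) v <-> (fun _ : nat => 0%Z) u = (fun _ : nat => 0%Z) v).
  by move=> u v; rewrite Hgs.
apply/(inv_main Hg richA richB Hpat).
by apply/Heq.
Qed.

End Inv.


Section LF.
Variables (S : Type) (ar : S -> nat).
Notation form := (form ar).

Inductive lf : Type :=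
| LT | LFa | LEq (x y : nat) | LOne (g : form) (x : nat) | LSen (g : form)
| LAt (R : S) (args : 'I_(ar R) -> nat) | LNot (l : lf) | LAnd (l1 l2 : lf).

Fixpoint lsat D (I : forall R : S, ('I_(ar R) -> D) -> Prop) (e : nat -> D) (l : lf) : Prop :=
  match l with
  | LT => True
  | LFa => False
  | LEq x y => e x = e y
  | LOne g x => sat I (fun _ => e x) g
  | LSen g => exists d, sat I (fun _ => d) g
  | LAt R args => I R (fun i => e (args i))
  | LNot l => ~ lsat I e l
  | LAnd a b => lsat I e a /\ lsat I e b
  end.

Fixpoint varsl (l : lf) : seq nat :=
  match l with
  | LEq x y => [:: x; y]
  | LOne _ x => [:: x]
  | LAt R args => atom_vars args
  | LNot l => varsl l
  | LAnd a b => varsl a ++ varsl b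
  | _ => [::]
  end.

Fixpoint avars (l : lf) : seq nat :=
  match l with
  | LAt R args => atom_vars args
  | LNot l => avars l
  | LAnd a b => avars a ++ avars b
  | _ => [::]
  end.

Definition C2 (g : form) : Prop := {subset allvars g <= [:: 0; 1]} /\ cnt_ok g.

Fixpoint wfl (l : lf) : Prop :=
  match l with
  | LOne g _ => C2 g
  | LSen g => C2 g
  | LNot l => wfl l
  | LAnd a b => wfl a /\ wfl b
  | _ => True
  end.

Lemma in_atom_vars R (args : 'I_(ar R) -> nat) i : args i \in atom_vars args.
Proof. by rewrite /atom_vars map_f // mem_enum. Qed.

Lemma lsat_ext D (I : forall R : S, ('I_(ar R) -> D) -> Prop) (l : lf) (e e' : nat -> D) :
  (forall z, z \in varsl l -> e z = e' z) -> (lsat I e l <-> lsat I e' l).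
Proof.
elim: l e e' => [||x y|g x|g|R args|l IH|a IHa b IHb] e e' H /=; try tauto.
- by rewrite (H x) ?(H y) // !inE eqxx ?orbT.
- by rewrite (H x) // inE.
- have -> // : (fun i => e (args i)) = (fun i => e' (args i)).
  by apply: functional_extensionality => i; rewrite H // in_atom_vars.
- by rewrite (IH e e').
- rewrite (IHa e e') ?(IHb e e') // => z Hz; apply: H; by rewrite mem_cat Hz ?orbT.
Qed.

Definition LOr a b := LNot (LAnd (LNot a) (LNot b)).
Definition lOrs (s : list lf) : lf := List.fold_right LOr LFa s.

Lemma lOrs_sat D (I : forall R : S, ('I_(ar R) -> D) -> Prop) e s :
  lsat I e (lOrs s) <-> exists a, List.In a s /\ lsat I e a.
Proof.
elim: s => [|a s IH]; first by split=> [[]|[a [[]]]].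
change (lsat I e (LOr a (lOrs s)) <-> exists b, List.In b (a :: s) /\ lsat I e b).
rewrite /LOr /=; split.
- move=> H; case: (classic (lsat I e a)) => Ha; first by exists a; split; [left|].
  have Hs : lsat I e (lOrs s) by apply: NNPP => Hs; apply: H.
  by move/IH: Hs => [b [Hb Hb']]; exists b; split; [right|].
- move=> [b [[<-|Hb] Hb']] [H1 H2] //.
  by apply: H2; apply/IH; exists b.
Qed.

Lemma lOrs_varsl s z : z \in varsl (lOrs s) -> exists a, List.In a s /\ z \in varsl a.
Proof.
elim: s => [|a s IH] //=; rewrite mem_cat => /orP[Hz|/IH [b [Hb Hz]]].
- by exists a; split; [left|].
- by exists b; split; [right|].
Qed.

Lemma lOrs_avars s z : z \in avars (lOrs s) -> exists a, List.In a s /\ z \in avars a.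
Proof.
elim: s => [|a s IH] //=; rewrite mem_cat => /orP[Hz|/IH [b [Hb Hz]]].
- by exists a; split; [left|].
- by exists b; split; [right|].
Qed.

Lemma lOrs_wfl s : (forall a, List.In a s -> wfl a) -> wfl (lOrs s).
Proof.
elim: s => [|a s IH] //= H; split; [apply: H; left| apply: IH => b Hb; apply: H; right] => //.
Qed.

Definition fOr (a b : form) : form := FNeg (FAnd (FNeg a) (FNeg b)).
Definition fOrs (s : list form) : form := List.fold_right fOr (FBot ar) s.

Lemma fOrs_sat D (I : forall R : S, ('I_(ar R) -> D) -> Prop) e s :
  sat I e (fOrs s) <-> exists a, List.In a s /\ sat I e a.
Proof.
elim: s => [|a s IH]; first by split=> [[]|[a [[]]]].
change (sat I e (fOr a (fOrs s)) <-> exists b, List.In b (a :: s) /\ sat I e b).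
rewrite /fOr /=; split.
- move=> H; case: (classic (sat I e a)) => Ha; first by exists a; split; [left|].
  have Hs : sat I e (fOrs s) by apply: NNPP => Hs; apply: H.
  by move/IH: Hs => [b [Hb Hb']]; exists b; split; [right|].
- move=> [b [[<-|Hb] Hb']] [H1 H2] //.
  by apply: H2; apply/IH; exists b.
Qed.

Lemma C2_or a b : C2 a -> C2 b -> C2 (fOr a b).
Proof.
move=> [Ha Ca] [Hb Cb]; split=> //= z; rewrite mem_cat => /orP[/Ha|/Hb] //.
Qed.

Lemma C2_ors s : (forall a, List.In a s -> C2 a) -> C2 (fOrs s).
Proof.
elim: s => [|a s IH] /= H; first by split.
apply: C2_or; [apply: H; left | apply: IH => b Hb; apply: H; right] => //.
Qed.

Lemma C2_and a b : C2 a -> C2 b -> C2 (FAnd a b).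
Proof. by move=> [Ha Ca] [Hb Cb]; split=> //= z; rewrite mem_cat => /orP[/Ha|/Hb]. Qed.

Lemma C2_neg a : C2 a -> C2 (FNeg a).
Proof. by []. Qed.

Lemma C2_ex x a : x \in [:: 0; 1] -> C2 a -> C2 (FEx x a).
Proof. by move=> Hx [Ha Ca]; split=> //= z; rewrite in_cons => /orP[/eqP->|/Ha]. Qed.

Lemma C2_cnt k x a : 0 < k -> x \in [:: 0; 1] -> C2 a -> C2 (FCnt k x a).
Proof. by move=> Hk Hx [Ha Ca]; split=> //= z; rewrite in_cons => /orP[/eqP->|/Ha]. Qed.

Lemma C2_eq x y : x \in [:: 0; 1] -> y \in [:: 0; 1] -> C2 (FEq ar x y).
Proof.
move=> Hx Hy; split=> //= z; rewrite in_cons => /orP[/eqP->//|].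
by rewrite in_cons => /orP[/eqP->//|]; rewrite in_nil.
Qed.

Lemma C2_ext D (I : forall R : S, ('I_(ar R) -> D) -> Prop) g (e e' : nat -> D) :
  C2 g -> e 0 = e' 0 -> e 1 = e' 1 -> (sat I e g <-> sat I e' g).
Proof.
move=> [Hg _] H0 H1; apply: sat_fv => z /fv_allvars /Hg.
by rewrite !inE => /orP[/eqP->|/eqP->].
Qed.

Lemma C2_imp D (I : forall R : S, ('I_(ar R) -> D) -> Prop) g (e e' : nat -> D) :
  C2 g -> e 0 = e' 0 -> e 1 = e' 1 -> sat I e g -> sat I e' g.
Proof. by move=> Cg H0 H1; apply (proj1 (C2_ext I Cg H0 H1)). Qed.

Definition emb0 (g : form) : form := FEx 1 (FAnd (FEq ar 1 0) g).
Definition emb1 (g : form) : form := FEx 0 (FAnd (FEq ar 0 1) g).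

Lemma emb0_sat D (I : forall R : S, ('I_(ar R) -> D) -> Prop) g (E : nat -> D) :
  C2 g -> (sat I E (emb0 g) <-> sat I (fun _ => E 0) g).
Proof.
move=> Cg; rewrite /emb0 /=; split.
- move=> [d [Hd Hs]]; move: Hd Hs; rewrite /upd /= => ->.
  by apply: (C2_imp Cg); rewrite /upd.
- move=> Hs; exists (E 0); split; first by rewrite /upd.
  by apply: (C2_imp Cg _ _ Hs); rewrite /upd.
Qed.

Lemma emb1_sat D (I : forall R : S, ('I_(ar R) -> D) -> Prop) g (E : nat -> D) :
  C2 g -> (sat I E (emb1 g) <-> sat I (fun _ => E 1) g).
Proof.
move=> Cg; rewrite /emb1 /=; split.
- move=> [d [Hd Hs]]; move: Hd Hs; rewrite /upd /= => ->.
  by apply: (C2_imp Cg); rewrite /upd.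
- move=> Hs; exists (E 1); split; first by rewrite /upd.
  by apply: (C2_imp Cg _ _ Hs); rewrite /upd.
Qed.

Lemma C2_emb0 g : C2 g -> C2 (emb0 g).
Proof. by move=> Cg; apply: C2_ex => //; apply: C2_and => //; apply: C2_eq. Qed.
Lemma C2_emb1 g : C2 g -> C2 (emb1 g).
Proof. by move=> Cg; apply: C2_ex => //; apply: C2_and => //; apply: C2_eq. Qed.

End LF.

Opaque emb0 emb1.


Lemma In_mem (T : eqType) (x : T) (s : seq T) : List.In x s -> x \in s.
Proof. by elim: s => //= a s IH [->|/IH]; rewrite inE ?eqxx // => ->; rewrite orbT. Qed.

Lemma uniq_NoDup (T : eqType) (s : seq T) : uniq s -> List.NoDup s.
Proof.
elim: s => [|a s IH] /=; first by constructor.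
by case/andP=> Ha Hs; constructor; [move/In_mem; rewrite (negbTE Ha) | exact: IH].
Qed.

Lemma NoDup_map_inj A B (f : A -> B) (s : list A) :
  injective f -> List.NoDup s -> List.NoDup (List.map f s).
Proof.
move=> Hf; elim: s => [|a s IH] /=; first by constructor.
move=> H; inversion H; subst; constructor; last exact: IH.
by move/List.in_map_iff=> [x [/Hf -> Hx]].
Qed.

Lemma length_size A (s : list A) : List.length s = size s.
Proof. by elim: s => //= a s ->. Qed.

Lemma cnt_list D (P : D -> Prop) n :
  (exists h : 'I_n -> D, injective h /\ forall i, P (h i)) <->
  (exists l : list D, List.length l = n /\ List.NoDup l /\ forall x, List.In x l -> P x).
Proof.
split.
- move=> [h [hi hP]]; exists (List.map h (enum 'I_n)); split; last split.
  + by rewrite List.length_map length_size size_enum_ord.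
  + by apply: NoDup_map_inj => //; apply: uniq_NoDup; apply: enum_uniq.
  + by move=> x /List.in_map_iff [i [<- _]].
- move=> [l [Hl [Hn HP]]]; case: l Hl Hn HP => [|d l] Hl Hn HP.
    move: Hl => /= <-; exists (fun i : 'I_0 => ltac:(exfalso; by case: i)).
    by split; case.
  exists (fun i : 'I_n => List.nth i (d :: l) d); split.
  + move=> i j /(proj1 (List.NoDup_nth (d :: l) d) Hn); rewrite Hl => H.
    by apply: val_inj; apply: H; apply/ltP.
  + by move=> i; apply: HP; apply: List.nth_In; rewrite Hl; apply/ltP.
Qed.



Section T2.
Variables (S : Type) (ar : S -> nat).
Notation form := (form ar).
Notation lf := (lf ar).

Definition vb (b : bool) : nat := if b then 1 else 0.

Fixpoint trans2 (m : nat -> bool) (l : lf) : form :=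
  match l with
  | LT => FTop ar
  | LFa => FBot ar
  | LEq x y => FEq ar (vb (m x)) (vb (m y))
  | LOne g x => if m x then emb1 g else emb0 g
  | LSen g => FEx 0 (emb0 g)
  | LAt R args => FAtom (fun i => vb (m (args i)))
  | LNot l => FNeg (trans2 m l)
  | LAnd a b => FAnd (trans2 m a) (trans2 m b)
  end.

Lemma trans2_sat D (I : forall R : S, ('I_(ar R) -> D) -> Prop) m (l : lf) (e E : nat -> D) :
  wfl l -> (forall z, z \in varsl l -> E (vb (m z)) = e z) ->
  (lsat I e l <-> sat I E (trans2 m l)).
Proof.
elim: l e E => [||x y|g x|g|R args|l IH|a IHa b IHb] e E /= Hw H; try tauto.
- by rewrite -(H x) ?(H y) // !inE eqxx ?orbT.
- have Hx := H x (mem_head _ _); case Hm: (m x) Hx => /= Hx.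
  + by rewrite (emb1_sat _ _ Hw) Hx.
  + by rewrite (emb0_sat _ _ Hw) Hx.
- split=> -[d Hd]; exists d; [apply/emb0_sat => //| move: Hd; rewrite emb0_sat]; by [].
- have -> // : (fun i => e (args i)) = (fun i => E (vb (m (args i)))).
  by apply: functional_extensionality => i; rewrite H // in_atom_vars.
- by rewrite (IH e E).
- case: Hw => Ha Hb.
  rewrite (IHa e E) ?(IHb e E) // => z Hz; apply: H; by rewrite mem_cat Hz ?orbT.
Qed.

Lemma trans2_C2 m (l : lf) : wfl l -> C2 (trans2 m l).
Proof.
elim: l => [||x y|g x|g|R args|l IH|a IHa b IHb] /= Hw.
- by split.
- by split.
- by apply: C2_eq; rewrite /vb; case: (m x); case: (m y).
- by case: (m x); [apply: C2_emb1 | apply: C2_emb0].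
- by apply: C2_ex => //; apply: C2_emb0.
- split=> // z /mapP [i _ ->]; rewrite /vb; by case: (m (args i)).
- exact: C2_neg (IH Hw).
- by case: Hw => Ha Hb; apply: C2_and; [apply: IHa | apply: IHb].
Qed.

Lemma fv_emb0 (g : form) : C2 g -> {subset fv (emb0 g) <= [:: 0]}.
Proof.
move=> [Hg _] z; rewrite /= mem_filter => /andP[z1].
rewrite !inE (negbTE z1) /= => /orP[//|/fv_allvars /Hg].
by rewrite !inE (negbTE z1) orbF.
Qed.

Lemma trans2_closed (l : lf) : wfl l -> varsl l = [::] -> fv (trans2 (fun _ => false) l) = [::].
Proof.
elim: l => [||x y|g x|g|R args|l IH|a IHa b IHb] //= Hw Hv.
- apply/eqP; rewrite -size_eq0; apply/eqP.
  case: (fv (emb0 g)) (fv_emb0 Hw) => //= a s H.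
  have := H a (mem_head _ _); rewrite inE => /eqP ->.
  rewrite eqxx /=; elim: s {H} (fun z Hz => H z (mem_behead Hz)) => //= c s IHs H.
  have := H c (mem_head _ _); rewrite inE => /eqP ->; rewrite eqxx /=.
  by apply: IHs => z Hz; apply: H; rewrite inE Hz orbT.
- move: Hv; rewrite /atom_vars => /eqP; rewrite -size_eq0 size_map => /eqP Hs.
  by apply/eqP; rewrite -size_eq0 size_map Hs.
- case: Hw => Ha Hb; have Ea : varsl a = [::] by move: Hv; case: (varsl a).
  by move: Hv; rewrite Ea /= => Eb; rewrite IHa ?IHb.
Qed.

Definition sv (y z v : nat) : nat := if v == y then z else v.

Fixpoint lsubst (y z : nat) (l : lf) : lf :=
  match l with
  | LEq a b => LEq ar (sv y z a) (sv y z b)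
  | LOne g x => LOne g (sv y z x)
  | LAt R args => LAt (fun i => sv y z (args i))
  | LNot l => LNot (lsubst y z l)
  | LAnd a b => LAnd (lsubst y z a) (lsubst y z b)
  | l => l
  end.

Lemma lsubst_sat D (I : forall R : S, ('I_(ar R) -> D) -> Prop) y z (l : lf) (e : nat -> D) :
  lsat I e (lsubst y z l) <-> lsat I (upd e y (e z)) l.
Proof.
have E v : e (sv y z v) = upd e y (e z) v by rewrite /sv /upd; case: (v == y).
elim: l => [||a b|g x|g|R args|l IH|a IHa b IHb] //=; rewrite ?E //.
- by have -> : (fun i => e (sv y z (args i))) = (fun i => upd e y (e z) (args i))
    by apply: functional_extensionality => i; rewrite E.
- by rewrite IH.
- by rewrite IHa IHb.
Qed.

Lemma lsubst_varsl y z (l : lf) : varsl (lsubst y z l) = map (sv y z) (varsl l).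
Proof.
elim: l => [||a b|g x|g|R args|l IH|a IHa b IHb] //=.
- by rewrite /atom_vars -map_comp.
- by rewrite IHa IHb map_cat.
Qed.

Lemma lsubst_avars y z (l : lf) : avars (lsubst y z l) = map (sv y z) (avars l).
Proof.
elim: l => [||a b|g x|g|R args|l IH|a IHa b IHb] //=.
- by rewrite /atom_vars -map_comp.
- by rewrite IHa IHb map_cat.
Qed.

Lemma lsubst_wfl y z (l : lf) : wfl (lsubst y z l) = wfl l.
Proof. by elim: l => [||a b|g x|g|R args|l IH|a IHa b IHb] //=; rewrite ?IHa ?IHb. Qed.

Lemma Fin0_sat D (I : forall R : S, ('I_(ar R) -> D) -> Prop) x0 (l : lf) (e : nat -> D) :
  wfl l -> {subset varsl l <= [:: x0]} ->
  (lsat I e l <-> sat I (fun _ => e x0) (trans2 (fun _ => false) l)).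
Proof.
by move=> Hw Hv; apply: trans2_sat => // z /Hv; rewrite inE => /eqP ->.
Qed.

Definition Fin1 (y : nat) (l : lf) : form := FEx 1 (trans2 (fun z => z == y) l).

Lemma Fin1_C2 y (l : lf) : wfl l -> C2 (Fin1 y l).
Proof. by move=> Hw; apply: C2_ex => //; apply: trans2_C2. Qed.

Lemma Fin1_sat D (I : forall R : S, ('I_(ar R) -> D) -> Prop) x0 y (l : lf) (e : nat -> D) :
  x0 != y -> wfl l -> {subset varsl l <= [:: x0; y]} ->
  ((exists d, lsat I (upd e y d) l) <-> sat I (fun _ => e x0) (Fin1 y l)).
Proof.
move=> xy Hw Hv; rewrite /Fin1 /=.
have K d : lsat I (upd e y d) l <-> sat I (upd (fun _ => e x0) 1 d) (trans2 (fun z => z == y) l).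
  apply: trans2_sat => // z /Hv; rewrite !inE => /orP[/eqP->|/eqP->].
    by rewrite /= (negbTE xy) /upd /= (negbTE xy).
  by rewrite /= eqxx /upd /= eqxx.
by split=> -[d Hd]; exists d; apply/K.
Qed.

Fixpoint notin (r : nat) (R : seq nat) : lf :=
  match R with
  | [::] => LT ar
  | r' :: R' => LAnd (LNot (LEq ar r r')) (notin r R')
  end.

Lemma notin_sat D (I : forall R : S, ('I_(ar R) -> D) -> Prop) r R (e : nat -> D) :
  lsat I e (notin r R) <-> forall z, z \in R -> e r <> e z.
Proof.
elim: R => [|r' R IH] /=; first by split.
rewrite IH; split.
- by move=> [H1 H2] z; rewrite inE => /orP[/eqP->|/H2].
- by move=> H; split; [apply: H; rewrite inE eqxx | move=> z Hz; apply: H; rewrite inE Hz orbT].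
Qed.

Lemma notin_varsl r R z : z \in varsl (notin r R) -> z \in r :: R.
Proof.
elim: R => [|r' R IH] //=; rewrite !inE => /orP[->//|/orP[->|/IH]]; rewrite ?orbT //.
by rewrite inE => /orP[->//|->]; rewrite !orbT.
Qed.

Lemma notin_avars r R : avars (notin r R) = [::].
Proof. by elim: R => //= r' R ->. Qed.

Lemma notin_wfl r R : wfl (notin r R).
Proof. by elim: R. Qed.

Fixpoint Exn (th : form) (n : nat) (R : seq nat) : lf :=
  match R with
  | [::] => if n is 0 then LT ar else LSen (FCnt n 0 (emb0 th))
  | r :: R' => LOr (LAnd (LAnd (LOne th r) (notin r R')) (Exn th n.+1 R'))
                   (LAnd (LNot (LAnd (LOne th r) (notin r R'))) (Exn th n R'))
  end.

Definition ExSpec D (I : forall R : S, ('I_(ar R) -> D) -> Prop) (th : form) n (R : seq nat) (e : nat -> D) :=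
  exists l : list D, List.length l = n /\ List.NoDup l /\
    forall x, List.In x l -> sat I (fun _ => x) th /\ forall z, z \in R -> x <> e z.

Lemma Exn_sat D (I : forall R : S, ('I_(ar R) -> D) -> Prop) th R :
  C2 th -> forall n (e : nat -> D), lsat I e (Exn th n R) <-> ExSpec I th n R e.
Proof.
move=> Cth; elim: R => [|r R IH] n e.
- case: n => [|n] /=.
    by split=> // _; exists [::]; split=> //; split=> //; constructor.
  have K h : (forall i : 'I_n.+1, sat I (upd (fun _ => e 0) 0 (h i)) (emb0 th)) <->
             (forall i, sat I (fun _ => h i) th).
    by split=> H i; move: (H i); rewrite emb0_sat.
  rewrite /ExSpec; split.
  + move=> [d [h [hi hs]]].
    have [l [Hl [Hn HP]]] : exists l : list D, List.length l = n.+1 /\ List.NoDup l /\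
        forall x, List.In x l -> sat I (fun _ => x) th.
      apply/(@cnt_list D (fun x => sat I (fun _ => x) th) n.+1); exists h; split=> // i; move: (hs i); by rewrite emb0_sat.
    by exists l; split=> //; split=> // x Hx; split; [apply: HP|].
  + move=> [l [Hl [Hn HP]]].
    have [h [hi hs]] : exists h : 'I_n.+1 -> D, injective h /\ forall i, sat I (fun _ => h i) th.
      by apply/(@cnt_list D (fun x => sat I (fun _ => x) th) n.+1); exists l; split=> //; split=> // x /HP [].
    by exists (e 0), h; split=> // i; apply/(emb0_sat _ _ Cth); exact: hs.
- rewrite /Exn -/Exn /LOr /=.
  set C := sat I (fun _ => e r) th /\ forall z, z \in R -> e r <> e z.
  have NC : lsat I e (notin r R) <-> (forall z, z \in R -> e r <> e z) by apply: notin_sat.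
  rewrite NC !IH.
  have [HC|HC] := classic C.
  + have -> : ExSpec I th n (r :: R) e <-> ExSpec I th n.+1 R e.
      split.
      * move=> [l [Hl [Hn HP]]]; exists (e r :: l); split; first by rewrite /= Hl.
        split.
          constructor=> // Hin; case: (HP _ Hin) => _ /(_ r); rewrite inE eqxx; by apply.
        move=> x /= [<-|Hx]; first by case: HC.
        case: (HP _ Hx) => Ht Ha; split=> // z Hz; apply: Ha; by rewrite inE Hz orbT.
      * move=> [l [Hl [Hn HP]]].
        case: (classic (List.In (e r) l)) => Hin.
          case: (List.in_split _ _ Hin) => l1 [l2 El]; subst l.
          exists (l1 ++ l2); split.
            by move: Hl; rewrite !List.length_app /=; lia.
          split; first exact: List.NoDup_remove_1 Hn.
          have NI := List.NoDup_remove_2 _ _ _ Hn.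
          move=> x Hx; have Hx' : List.In x (l1 ++ e r :: l2).
            by apply/List.in_app_iff; case/List.in_app_iff: Hx; [left|right; right].
          case: (HP _ Hx') => Ht Ha; split=> // z; rewrite inE => /orP[/eqP->|/Ha//].
          by move=> E; apply: NI; rewrite -E.
        case: l Hl Hn HP Hin => [|x l] //= [Hl] Hn HP Hin.
        inversion Hn; subst; exists l; split=> //; split=> // y Hy.
        case: (HP y (or_intror Hy)) => Ht Ha; split=> // z; rewrite inE => /orP[/eqP->|/Ha//].
        by move=> E; apply: Hin; right; rewrite -E.
    by split; [tauto | move=> H [H1 H2]; apply: H1; split].
  + have -> : ExSpec I th n (r :: R) e <-> ExSpec I th n R e.
      split.
      * move=> [l [Hl [Hn HP]]]; exists l; split=> //; split=> // x Hx.
        case: (HP _ Hx) => Ht Ha; split=> // z Hz; apply: Ha; by rewrite inE Hz orbT.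
      * move=> [l [Hl [Hn HP]]]; exists l; split=> //; split=> // x Hx.
        case: (HP _ Hx) => Ht Ha; split=> // z; rewrite inE => /orP[/eqP->|/Ha//].
        move=> E; apply: HC; split; first by rewrite -E.
        by move=> z' Hz'; rewrite -E; apply: Ha.
    split; last by move=> H [H1 H2]; apply: H2; split=> // -[A B]; apply: HC.
    move=> H; apply: NNPP => H'; apply: H; split.
      by move=> [[A B] _]; apply: HC.
    by move=> [_ ?]; apply: H'.
Qed.

Lemma Exn_varsl th n R z : z \in varsl (Exn th n R) -> z \in R.
Proof.
elim: R n => [|r R IH] n; first by case: n.
move=> H; rewrite inE; have [//|nz] := boolP (z == r); rewrite /=.
move: H; rewrite /= !(mem_cat, inE) => H.
repeat match goal with H : is_true (_ || _) |- _ => case/orP: H => H end;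
  first [ by move: H; rewrite (negbTE nz) | by move/IH: H | by move/notin_varsl: H; rewrite inE (negbTE nz) ].
Qed.

Lemma Exn_avars th n R : avars (Exn th n R) = [::].
Proof. by elim: R n => [|r R IH] [|n] //=; rewrite ?notin_avars ?IH. Qed.

Lemma Exn_wfl th n R : C2 th -> wfl (Exn th n R).
Proof.
move=> Cth; elim: R n => [|r R IH] n.
  case: n => //= n; apply: C2_cnt => //; exact: C2_emb0.
by rewrite /=; do !split => //; try apply: IH; apply: notin_wfl.
Qed.

End T2.


Lemma In_memR (T : eqType) (x : T) (s : seq T) : x \in s -> List.In x s.
Proof. elim: s => //= a s IH; rewrite inE => /orP[/eqP->|/IH]; by [left|right]. Qed.

Section Part.
Variables (S : Type) (ar : S -> nat).
Notation form := (form ar).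
Notation lf := (lf ar).

Fixpoint part (y : nat) (l : lf) : list (form * lf) :=
  match l with
  | LOne g x => if x == y then [:: (g, LT ar); (FNeg g, LFa ar)] else [:: (FTop ar, l)]
  | LEq a b => if (a == y) && (b == y) then [:: (FTop ar, LT ar)]
               else if (a == y) || (b == y) then [:: (FTop ar, LFa ar)]
               else [:: (FTop ar, l)]
  | LNot l' => List.map (fun p => (p.1, LNot p.2)) (part y l')
  | LAnd a b => List.flat_map (fun p => List.map (fun q => (FAnd p.1 q.1, LAnd p.2 q.2)) (part y b))
                  (part y a)
  | _ => [:: (FTop ar, l)]
  end.

Lemma part_sat D (I : forall R : S, ('I_(ar R) -> D) -> Prop) y (l : lf) (e : nat -> D) :
  (forall z, z \in varsl l -> z != y -> e y <> e z) ->
  (exists p, List.In p (part y l) /\ sat I (fun _ => e y) p.1) /\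
  (forall p, List.In p (part y l) -> sat I (fun _ => e y) p.1 -> (lsat I e l <-> lsat I e p.2)).
Proof.
elim: l => [||a b|g x|g|R args|l IH|a IHa b IHb] /= Hv.
- by split; [exists (FTop ar, LT ar); split; [left|] | move=> p [<-|[]]].
- by split; [exists (FTop ar, LFa ar); split; [left|] | move=> p [<-|[]]].
- case: (boolP ((a == y) && (b == y))) => [/andP[/eqP-> /eqP->]|nab].
    by split; [exists (FTop ar, LT ar); split; [left|] | move=> p [<-|[]]].
  case: (boolP ((a == y) || (b == y))) => [ab|nab'].
    split; [exists (FTop ar, LFa ar); split; [left|] | move=> p [<-|[]]] => //= _.
    split=> // Eab; move: nab ab; case: (boolP (a == y)) => [/eqP Ea|na] /=.
      move=> nb _; apply: (Hv b); rewrite ?inE ?eqxx ?orbT //; by rewrite -Ea Eab.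
    move=> _ /eqP Eb; apply: (Hv a); rewrite ?inE ?eqxx //; by rewrite -Eb Eab.
  by split; [exists (FTop ar, LEq ar a b); split; [left|] | move=> p [<-|[]]].
- case: (boolP (x == y)) => [/eqP Ex|nx].
    split.
      case: (classic (sat I (fun _ => e y) g)) => Hg.
        by exists (g, LT ar); split; [left|].
      by exists (FNeg g, LFa ar); split; [right; left|].
    by move=> p [<-|[<-|[]]] /= Hs; rewrite Ex.
  by split; [exists (FTop ar, LOne g x); split; [left|] | move=> p [<-|[]]].
- by split; [exists (FTop ar, LSen g); split; [left|] | move=> p [<-|[]]].
- by split; [exists (FTop ar, LAt args); split; [left|] | move=> p [<-|[]]].
- have [[p [Hp Hs]] H2] := IH Hv; split.
    by exists (p.1, LNot p.2); split=> //; apply/List.in_map_iff; exists p.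
  move=> q /List.in_map_iff [p' [<- Hp']] /= Hs'; by rewrite (H2 p' Hp' Hs').
- have Hva : forall z, z \in varsl a -> z != y -> e y <> e z.
    by move=> z Hz; apply: Hv; rewrite mem_cat Hz.
  have Hvb : forall z, z \in varsl b -> z != y -> e y <> e z.
    by move=> z Hz; apply: Hv; rewrite mem_cat Hz orbT.
  have [[p [Hp Hs]] Ha2] := IHa Hva; have [[q [Hq Hsq]] Hb2] := IHb Hvb; split.
    exists (FAnd p.1 q.1, LAnd p.2 q.2); split=> //.
    by apply/List.in_flat_map; exists p; split=> //; apply/List.in_map_iff; exists q.
  move=> r /List.in_flat_map [p' [Hp' /List.in_map_iff [q' [<- Hq']]]] /= [Hs1 Hs2].
  by rewrite (Ha2 p' Hp' Hs1) (Hb2 q' Hq' Hs2).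
Qed.

Lemma C2_top : C2 (FTop ar). Proof. by split. Qed.

Lemma part_props y (l : lf) : wfl l -> forall p, List.In p (part y l) ->
  [/\ C2 p.1, wfl p.2,
      (forall z, z \in varsl p.2 -> z \in varsl l /\ (z != y \/ z \in avars l)) &
      {subset avars p.2 <= avars l}].
Proof.
elim: l => [||a b|g x|g|R args|l IH|a IHa b IHb] /= Hw p.
- by move=> [<-|[]]; split=> //; exact: C2_top.
- by move=> [<-|[]]; split=> //; exact: C2_top.
- case: ifP => [_ [<-|[]]|_]; first by split=> //; exact: C2_top.
  case: ifP => [_ [<-|[]]|/negbT]; first by split=> //; exact: C2_top.
  rewrite negb_or => /andP[na nb] [<-|[]]; split=> //; try exact: C2_top.
  by move=> z /= Hz; split=> //; left; move: Hz; rewrite !inE => /orP[/eqP->|/eqP->].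
- case: ifP => [_ [<-|[<-|[]]]|/negbT nx [<-|[]]] //=; try by split=> //; exact: C2_top.
  split=> //; try exact: C2_top.
  by move=> z Hz; split=> //; left; move: Hz; rewrite mem_seq1 => /eqP ->.
- by move=> [<-|[]]; split=> //; exact: C2_top.
- move=> [<-|[]]; split=> //; try exact: C2_top.
  by move=> z Hz; split=> //; right.
- move=> /List.in_map_iff [q [<- Hq]] /=; have [? ? ? ?] := IH Hw q Hq; by split.
- case: Hw => Hwa Hwb.
  move=> /List.in_flat_map [p' [Hp' /List.in_map_iff [q' [<- Hq']]]] /=.
  have [C1 W1 V1 A1] := IHa Hwa p' Hp'; have [C2' W2 V2 A2] := IHb Hwb q' Hq'.
  split; [exact: C2_and | by split | |].
  + move=> z; rewrite mem_cat => /orP[/V1|/V2] [H1 [H2|H2]];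
      rewrite mem_cat ?H1 ?orbT; split=> //; try (by left); by right; rewrite mem_cat H2 ?orbT.
  + by move=> z; rewrite !mem_cat => /orP[/A1->|/A2->]; rewrite ?orbT.
Qed.

Definition Elim (y : nat) (l : lf) : lf :=
  let R := [seq z <- varsl l | z != y] in
  lOrs (List.app (List.map (fun z => lsubst y z l) R)
                 (List.map (fun p => LAnd p.2 (Exn p.1 1 R)) (part y l))).

Lemma Elim_sat D (I : forall R : S, ('I_(ar R) -> D) -> Prop) y (l : lf) (e : nat -> D) :
  wfl l -> y \notin avars l ->
  (lsat I e (Elim y l) <-> exists d, lsat I (upd e y d) l).
Proof.
move=> Hw ny; rewrite /Elim lOrs_sat; set R := [seq z <- varsl l | z != y].
have noy p : List.In p (part y l) -> y \notin varsl p.2.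
  move=> Hp; have [_ _ V _] := part_props Hw Hp.
  by apply/negP => /V [_ [/negP|]]; [rewrite eqxx | rewrite (negbTE ny)].
have ext p d : List.In p (part y l) -> (lsat I (upd e y d) p.2 <-> lsat I e p.2).
  move=> Hp; apply: lsat_ext => z Hz; rewrite /upd; case: eqP => // Ez.
  by move: (noy p Hp); rewrite -Ez Hz.
split.
- move=> [a [/List.in_app_iff [/List.in_map_iff [z [<- Hz]]|/List.in_map_iff [p [<- Hp]]] Ha]].
    by exists (e z); apply/lsubst_sat.
  case: Ha => Hc HE.
  have Cp : C2 p.1 by case: (part_props Hw Hp).
  have [ll [Hl [_ HP]]] := proj1 (@Exn_sat S ar D I p.1 R Cp 1 e) HE.
  case: ll Hl HP => [|d [|? ?]] // _ HP; exists d.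
  have [Ht Hd] := HP d (or_introl erefl).
  have Hcond : forall z, z \in varsl l -> z != y -> upd e y d y <> upd e y d z.
    move=> z Hz nzy; rewrite /upd eqxx (negbTE nzy); apply: Hd; by rewrite mem_filter nzy.
  have [_ H2] := part_sat I Hcond.
  have Ht' : sat I (fun _ => upd e y d y) p.1 by rewrite /upd eqxx.
  apply/(H2 p Hp Ht'); apply/(ext p d Hp) => //.
- move=> [d Hd].
  case: (classic (exists z, z \in R /\ d = e z)) => [[z [Hz Ez]]|Hn].
    exists (lsubst y z l); split.
      by apply/List.in_app_iff; left; apply/List.in_map_iff; exists z; split=> //; apply/In_memR.
    by apply/lsubst_sat; rewrite -Ez.
  have Hc : forall z, z \in varsl l -> z != y -> upd e y d y <> upd e y d z.
    move=> z Hz nz; rewrite /upd eqxx (negbTE nz) => Ez; apply: Hn; exists z; split=> //.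
    by rewrite mem_filter nz.
  have [[p [Hp Hs]] H2] := part_sat I Hc.
  move: Hs; rewrite {1}/upd eqxx => Hs.
  exists (LAnd p.2 (Exn p.1 1 R)); split.
    by apply/List.in_app_iff; right; apply/List.in_map_iff; exists p.
  split.
    apply/(ext p d Hp); apply/(H2 p Hp) => //; by rewrite /upd eqxx.
  apply/Exn_sat; first by case: (part_props Hw Hp).
  exists [:: d]; split=> //; split; first by constructor=> //; constructor.
  move=> x [<-|[]]; split=> // z Hz Ez; apply: Hn; by exists z.
Qed.

End Part.


Section Fin.
Variables (S : Type) (ar : S -> nat).
Notation form := (form ar).
Notation lf := (lf ar).

Lemma Elim_props y (l : lf) : wfl l -> y \notin avars l ->
  [/\ wfl (Elim y l), (forall z, z \in varsl (Elim y l) -> z \in varsl l /\ z != y)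
    & {subset avars (Elim y l) <= avars l}].
Proof.
move=> Hw ny; rewrite /Elim; set R := [seq z <- varsl l | z != y].
split.
- apply: lOrs_wfl => a /List.in_app_iff [/List.in_map_iff [z [<- _]]|/List.in_map_iff [p [<- Hp]]].
    by rewrite lsubst_wfl.
  have [C W _ _] := part_props Hw Hp; split=> //; exact: Exn_wfl.
- move=> z /lOrs_varsl [a [/List.in_app_iff [/List.in_map_iff [z' [<- Hz']]|/List.in_map_iff [p [<- Hp]]] Hz]].
    move: Hz; rewrite lsubst_varsl => /mapP [v Hv ->]; rewrite /sv.
    have := In_mem Hz'; rewrite mem_filter => /andP[nz' Hz''].
    by case: eqP => [_|/eqP nv]; split.
  move: Hz; rewrite /= mem_cat => /orP[Hz|/Exn_varsl].
    have [_ _ V _] := part_props Hw Hp; case: (V z Hz) => Hzl [//|Hza]; split=> //.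
    by apply/negP => /eqP Ez; move: ny; rewrite -Ez Hza.
  by rewrite mem_filter => /andP[].
- move=> z /lOrs_avars [a [/List.in_app_iff [/List.in_map_iff [z' [<- Hz']]|/List.in_map_iff [p [<- Hp]]] Hz]].
    move: Hz; rewrite lsubst_avars => /mapP [v Hv ->]; rewrite /sv.
    case: eqP => [Ev|//]; by move: ny; rewrite -Ev Hv.
  move: Hz; rewrite /= Exn_avars cats0; have [_ _ _ A] := part_props Hw Hp; exact: A.
Qed.

Definition Pair (y1 : nat) (chi : lf) : form :=
  let c := trans2 (fun z => z == y1) chi in
  FEx 1 (FAnd (FNeg (FEq ar 1 0))
    (fOr (FAnd c (FCnt 2 0 (FAnd (FNeg (FEq ar 0 1)) c)))
         (FAnd (FNeg c) (FEx 0 (FAnd (FNeg (FEq ar 0 1)) c))))).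

Lemma Pair_C2 y1 (chi : lf) : wfl chi -> C2 (Pair y1 chi).
Proof.
move=> Hw; have Cc := trans2_C2 (fun z => z == y1) Hw.
have Cn : C2 (FNeg (FEq ar 0 1)) by apply: C2_neg; apply: C2_eq.
have Cn' : C2 (FNeg (FEq ar 1 0)) by apply: C2_neg; apply: C2_eq.
apply: C2_ex => //; apply: C2_and => //; apply: C2_or.
  by apply: C2_and => //; apply: C2_cnt => //; apply: C2_and.
by apply: C2_and; [apply: C2_neg | apply: C2_ex => //; apply: C2_and].
Qed.

Lemma Pair_sat D (I : forall R : S, ('I_(ar R) -> D) -> Prop) y1 y2 (chi : lf) (e : nat -> D) a :
  wfl chi -> y1 != y2 -> {subset varsl chi <= [:: y1; y2]} ->
  (sat I (fun _ => a) (Pair y1 chi) <->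
   exists b q, b <> a /\ q <> a /\ q <> b /\ lsat I (upd (upd e y1 b) y2 q) chi).
Proof.
move=> Hw n12 Hv.
set c := trans2 (fun z => z == y1) chi.
have cval E : sat I E c <-> lsat I (upd (upd e y1 (E 1)) y2 (E 0)) chi.
  symmetry; apply: trans2_sat => // z /Hv; rewrite !inE => /orP[/eqP->|/eqP->].
    by rewrite eqxx /= /upd (negbTE n12) eqxx.
  by rewrite eq_sym (negbTE n12) /= /upd eqxx.
have U1 (f : nat -> D) x : upd f 1 x 1 = x by rewrite /upd.
have U2 (f : nat -> D) x : upd f 1 x 0 = f 0 by rewrite /upd.
have U3 (f : nat -> D) x : upd f 0 x 0 = x by rewrite /upd.
have U4 (f : nat -> D) x : upd f 0 x 1 = f 1 by rewrite /upd.
rewrite /Pair -/c /=; split.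
- move=> [b [nb H]]; move: H; rewrite /fOr /= => H.
  have {}H : (sat I (upd (fun _ => a) 1 b) c /\
              sat I (upd (fun _ => a) 1 b) (FCnt 2 0 (FAnd (FNeg (FEq ar 0 1)) c))) \/
             (~ sat I (upd (fun _ => a) 1 b) c /\
              sat I (upd (fun _ => a) 1 b) (FEx 0 (FAnd (FNeg (FEq ar 0 1)) c))).
    by apply: NNPP => H'; apply: H; split => H''; apply: H'; [left|right].
  move: nb; rewrite ?U1 ?U2 ?U3 ?U4 => nb.
  case: H => [[Hc [h [hi Hh]]]|[Hc [q [nq Hq]]]].
  + have P0 := Hh ord0; have P1 := Hh (@Ordinal 2 1 isT).
    move: P0 P1; rewrite ?U1 ?U2 ?U3 ?U4 => -[n0 c0] [n1 c1].
    move/cval: c0; move/cval: c1; rewrite ?U1 ?U2 ?U3 ?U4 => c1 c0.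
    case: (classic (h ord0 = a)) => H0.
    * exists b, (h (@Ordinal 2 1 isT)); do !split => //; try (by move=> E; apply: n1; rewrite E).
      by move=> E; have := hi _ _ (etrans E (esym H0)).
    * exists b, (h ord0); do !split => //; by move=> E; apply: n0; rewrite E.
  + move: nq Hq; rewrite ?U1 ?U2 ?U3 ?U4 => nq Hq.
    move/cval: Hq; rewrite ?U1 ?U2 ?U3 ?U4 => Hq.
    exists b, q; do !split => //; try (by move=> E; apply: nq; rewrite E).
    move=> E; apply: Hc; apply/cval; rewrite ?U1 ?U2 ?U3 ?U4; by rewrite -E.
- move=> [b [q [nb [nqa [nqb Hs]]]]]; exists b; split; first by rewrite ?U1 ?U2 ?U3 ?U4.
  case: (classic (lsat I (upd (upd e y1 b) y2 a) chi)) => Ha.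
  + move=> [H1 _]; apply: H1; split.
      by apply/cval; rewrite ?U1 ?U2 ?U3 ?U4.
    exists (fun i : 'I_2 => if val i == 0 then a else q); split.
      move=> [[|[|i]] Hi] [[|[|j]] Hj] //= E; try (by apply: val_inj);
        by [move: E => /esym /nqa | move: E => /nqa].
    move=> [[|[|i]] Hi] //=; rewrite ?U1 ?U2 ?U3 ?U4; split; try (by move=> E; apply: nb; rewrite E);
      try (by move=> E; apply: nqb; rewrite E); apply/cval; by rewrite ?U1 ?U2 ?U3 ?U4.
  + move=> [_ H2]; apply: H2; split.
      by move/cval; rewrite ?U1 ?U2 ?U3 ?U4.
    exists q; rewrite ?U1 ?U2 ?U3 ?U4; split; first by move=> E; apply: nqb; rewrite E.
    by apply/cval; rewrite ?U1 ?U2 ?U3 ?U4.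
Qed.

End Fin.


Section Fin2.
Variables (S : Type) (ar : S -> nat).
Notation form := (form ar).
Notation lf := (lf ar).

Definition Fin2 x0 y1 y2 (l : lf) : form :=
  fOrs (List.app [:: Fin1 y1 (lsubst y2 x0 l); Fin1 y1 (lsubst y2 y1 l); Fin1 y2 (lsubst y1 x0 l)]
    (List.map (fun p => FAnd (emb0 p.1) (Pair y1 p.2)) (part x0 l))).

Lemma Fin2_C2 x0 y1 y2 (l : lf) : wfl l -> C2 (Fin2 x0 y1 y2 l).
Proof.
move=> Hw; apply: C2_ors => a /List.in_app_iff [[<-|[<-|[<-|[]]]]|/List.in_map_iff [p [<- Hp]]];
  try (apply: Fin1_C2; by rewrite lsubst_wfl).
have [C W _ _] := part_props Hw Hp.
by apply: C2_and; [apply: C2_emb0 | apply: Pair_C2].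
Qed.

Lemma upd_comm D (e : nat -> D) y1 y2 a b z : y1 != y2 ->
  upd (upd e y1 a) y2 b z = upd (upd e y2 b) y1 a z.
Proof.
move=> n12; rewrite /upd; case: eqP => [->|_]; case: eqP => [E|_] //.
by move: n12; rewrite E eqxx.
Qed.

Lemma Fin2_sat D (I : forall R : S, ('I_(ar R) -> D) -> Prop) x0 y1 y2 (l : lf) (e : nat -> D) :
  x0 != y1 -> x0 != y2 -> y1 != y2 -> wfl l -> {subset varsl l <= [:: x0; y1; y2]} ->
  x0 \notin avars l ->
  ((exists d1 d2, lsat I (upd (upd e y1 d1) y2 d2) l) <->
   sat I (fun _ => e x0) (Fin2 x0 y1 y2 l)).
Proof.
move=> n01 n02 n12 Hw Hv na.
have sub1 : {subset varsl (lsubst y2 x0 l) <= [:: x0; y1]}.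
  move=> z; rewrite lsubst_varsl => /mapP [v /Hv Hv' ->]; rewrite /sv.
  case: eqP => [_|/eqP nv]; first by rewrite mem_head.
  by move: Hv'; rewrite !inE (negbTE nv) orbF.
have sub2 : {subset varsl (lsubst y2 y1 l) <= [:: x0; y1]}.
  move=> z; rewrite lsubst_varsl => /mapP [v /Hv Hv' ->]; rewrite /sv.
  case: eqP => [_|/eqP nv]; first by rewrite !inE eqxx orbT.
  by move: Hv'; rewrite !inE (negbTE nv) orbF.
have sub3 : {subset varsl (lsubst y1 x0 l) <= [:: x0; y2]}.
  move=> z; rewrite lsubst_varsl => /mapP [v /Hv Hv' ->]; rewrite /sv.
  case: eqP => [_|/eqP nv]; first by rewrite mem_head.
  by move: Hv'; rewrite !inE (negbTE nv) /=.
have w1 : wfl (lsubst y2 x0 l) by rewrite lsubst_wfl.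
have w2 : wfl (lsubst y2 y1 l) by rewrite lsubst_wfl.
have w3 : wfl (lsubst y1 x0 l) by rewrite lsubst_wfl.
have n21 : y2 != y1 by rewrite eq_sym.
have Pv : forall p, List.In p (part x0 l) -> {subset varsl p.2 <= [:: y1; y2]}.
  move=> p Hp z Hz; have [_ _ V _] := part_props Hw Hp.
  have [Hzl nz] : z \in varsl l /\ z != x0.
    case: (V z Hz) => Hzl [nz|Hza]; split=> //.
    by apply/negP => /eqP Ez; move: na; rewrite -Ez Hza.
  by move: (Hv z Hzl); rewrite !inE (negbTE nz).
have e'x0 d1 d2 : upd (upd e y1 d1) y2 d2 x0 = e x0 by rewrite /upd (negbTE n02) (negbTE n01).
have Pcond d1 d2 : d1 <> e x0 -> d2 <> e x0 ->
   forall z, z \in varsl l -> z != x0 ->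
     upd (upd e y1 d1) y2 d2 x0 <> upd (upd e y1 d1) y2 d2 z.
  move=> h1 h2 z Hz nz; rewrite e'x0.
  move: (Hv z Hz); rewrite !inE (negbTE nz) /= => /orP[/eqP->|/eqP->].
    by rewrite /upd (negbTE n12) eqxx => E; apply: h1.
  by rewrite /upd eqxx => E; apply: h2.
rewrite fOrs_sat; split.
- move=> [d1 [d2 Hs]].
  case: (classic (d2 = e x0)) => [E2|h2].
    exists (Fin1 y1 (lsubst y2 x0 l)); split; first by apply/List.in_app_iff; left; left.
    apply/(Fin1_sat I e n01 w1 sub1); exists d1; apply/lsubst_sat.
    have Ex : upd e y1 d1 x0 = e x0 by rewrite /upd (negbTE n01).
    by rewrite Ex -E2.
  case: (classic (d2 = d1)) => [E21|h21].
    exists (Fin1 y1 (lsubst y2 y1 l)); split; first by apply/List.in_app_iff; left; right; left.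
    apply/(Fin1_sat I e n01 w2 sub2); exists d1; apply/lsubst_sat.
    have Ex : upd e y1 d1 y1 = d1 by rewrite /upd eqxx.
    by rewrite Ex; rewrite E21 in Hs.
  case: (classic (d1 = e x0)) => [E1|h1].
    exists (Fin1 y2 (lsubst y1 x0 l)); split; first by apply/List.in_app_iff; left; right; right; left.
    apply/(Fin1_sat I e n02 w3 sub3); exists d2; apply/lsubst_sat.
    have -> : upd e y2 d2 x0 = e x0 by rewrite /upd (negbTE n02).
    apply/(lsat_ext I (e' := upd (upd e y1 d1) y2 d2)) => // z _.
    by rewrite upd_comm // E1.
  have [[p [Hp Hs1]] H2] := part_sat I (Pcond d1 d2 h1 h2).
  exists (FAnd (emb0 p.1) (Pair y1 p.2)); split.
    by apply/List.in_app_iff; right; apply/List.in_map_iff; exists p.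
  have [C W _ _] := part_props Hw Hp.
  split; first by apply/emb0_sat => //; rewrite -(e'x0 d1 d2).
  apply/(Pair_sat I e (e x0) W n12 (Pv p Hp)); exists d1, d2; do !split => //.
  by apply/(H2 p Hp Hs1).
- move=> [f [/List.in_app_iff [[<-|[<-|[<-|[]]]]|/List.in_map_iff [p [<- Hp]]] Hf]].
  + move/(Fin1_sat I e n01 w1 sub1): Hf => [d /lsubst_sat Hd].
    have Ex : upd e y1 d x0 = e x0 by rewrite /upd (negbTE n01).
    by exists d, (e x0); move: Hd; rewrite Ex.
  + move/(Fin1_sat I e n01 w2 sub2): Hf => [d /lsubst_sat Hd].
    have Ex : upd e y1 d y1 = d by rewrite /upd eqxx.
    by exists d, d; move: Hd; rewrite Ex.
  + move/(Fin1_sat I e n02 w3 sub3): Hf => [d /lsubst_sat Hd].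
    exists (e x0), d; move: Hd; have -> : upd e y2 d x0 = e x0 by rewrite /upd (negbTE n02).
    by apply: (proj1 (lsat_ext I _)) => z _; rewrite upd_comm.
  + have [C W _ _] := part_props Hw Hp.
    case: Hf => /(emb0_sat I _ C) He /(Pair_sat I e (e x0) W n12 (Pv p Hp)) [b [q [nb [nq [nqb Hs]]]]].
    exists b, q.
    have [_ H2] := part_sat I (Pcond b q nb nq).
    apply/(H2 p Hp) => //; by rewrite e'x0.
Qed.

Definition ClaimB_concl x0 (Q : seq nat) (l : lf) (Phi : form) : Prop :=
  forall D (I : forall R : S, ('I_(ar R) -> D) -> Prop) (e : nat -> D),
    (exists e', (forall z, z \notin Q -> e' z = e z) /\ lsat I e' l) <->
    sat I (fun _ => e x0) Phi.

Lemma final (W : seq nat) x0 (Q : seq nat) (l : lf) :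
  size W <= 2 -> uniq Q -> x0 \notin Q -> {subset Q <= W} -> wfl l ->
  {subset varsl l <= x0 :: Q} -> {subset avars l <= W} ->
  exists Phi, C2 Phi /\ ClaimB_concl x0 Q l Phi.
Proof.
move=> sW uQ nxQ QW Hw Hv Ha.
have sQ : size Q <= 2 := leq_trans (uniq_leq_size uQ QW) sW.
case: Q sQ uQ nxQ QW Hv => [|y1 [|y2 [|y3 Q']]] // _ uQ nxQ QW Hv.
- exists (trans2 (fun _ => false) l); split; first exact: trans2_C2.
  move=> D I e; rewrite -(Fin0_sat I e Hw Hv); split.
    by move=> [e' [He Hs]]; apply/(lsat_ext I (e := e')) => // z _; apply: He.
  by move=> Hs; exists e.
- have n01 : x0 != y1 by move: nxQ; rewrite inE.
  exists (Fin1 y1 l); split; first exact: Fin1_C2.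
  move=> D I e; rewrite -(Fin1_sat I e n01 Hw Hv); split.
    move=> [e' [He Hs]]; exists (e' y1); apply/(lsat_ext I (e := e')) => // z _.
    rewrite /upd; case: eqP => [->//|/eqP nz]; apply: He; by rewrite inE.
  move=> [d Hd]; exists (upd e y1 d); split=> // z; rewrite inE /upd => /negbTE ->.
  by [].
- have n01 : x0 != y1 by move: nxQ; rewrite !inE negb_or => /andP[].
  have n02 : x0 != y2 by move: nxQ; rewrite !inE negb_or => /andP[].
  have n12 : y1 != y2 by move: uQ => /andP[]; rewrite inE.
  have na : x0 \notin avars l.
    apply/negP => /Ha xW.
    have : size [:: x0; y1; y2] <= size W.
      apply: uniq_leq_size; first by rewrite /= !inE negb_or n01 n02 n12.
      move=> z; rewrite !inE => /orP[/eqP->//|/orP[/eqP->|/eqP->]]; apply: QW;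
        by rewrite !inE eqxx ?orbT.
    by move/leq_trans/(_ sW).
  exists (Fin2 x0 y1 y2 l); split; first exact: Fin2_C2.
  move=> D I e; rewrite -(Fin2_sat I e n01 n02 n12 Hw Hv na); split.
    move=> [e' [He Hs]]; exists (e' y1), (e' y2); apply/(lsat_ext I (e := e')) => // z _.
    rewrite /upd; case: eqP => [->//|/eqP nz2]; case: eqP => [->//|/eqP nz1].
    apply: He; by rewrite !inE negb_or nz1 nz2.
  move=> [d1 [d2 Hd]]; exists (upd (upd e y1 d1) y2 d2); split=> // z.
  rewrite !inE negb_or /upd => /andP[/negbTE -> /negbTE ->]; by [].
Qed.

Lemma elimQ (W : seq nat) x0 : size W <= 2 ->
  forall n (Q : seq nat) (l : lf), size Q <= n -> uniq Q -> x0 \notin Q -> wfl l ->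
  {subset varsl l <= x0 :: Q} -> {subset avars l <= W} -> {subset W <= x0 :: Q} ->
  exists Phi, C2 Phi /\ ClaimB_concl x0 Q l Phi.
Proof.
move=> sW; elim=> [|n IH] Q l hn uQ nxQ Hw Hv Ha HW.
  move: hn; rewrite leqn0 => /nilP EQ; subst Q; exact: (final sW uQ nxQ (fun z (Hz : z \in [::]) => ltac:(done)) Hw Hv Ha).
case: (boolP (has (fun y => y \notin W) Q)) => [/hasP [y yQ yW] | /hasPn allW]; last first.
  by apply: (final sW) => // z /allW; rewrite negbK.
have ny : y \notin avars l by apply/negP => /Ha; apply/negP.
have [Hw' Hv' Ha'] := Elim_props Hw ny.
set Q' := [seq z <- Q | z != y].
have hn' : size Q' <= n.
  have : size Q' < size Q.
    rewrite size_filter -(count_predC (fun z => z != y) Q) -addn1 leq_add2l.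
    by rewrite -has_count; apply/hasP; exists y => //=; rewrite negbK.
  by move=> H; rewrite -ltnS; apply: leq_trans H hn.
have nxQ' : x0 \notin Q' by rewrite mem_filter negb_and nxQ orbT.
have Hv2 : {subset varsl (Elim y l) <= x0 :: Q'}.
  move=> z Hz; case: (Hv' z Hz) => H1 H2; move: (Hv z H1).
  by rewrite !inE mem_filter H2.
have Ha2 : {subset avars (Elim y l) <= W} by move=> z Hz; apply: Ha; apply: Ha'.
have HW2 : {subset W <= x0 :: Q'}.
  move=> z Hz; move: (HW z Hz); rewrite !inE mem_filter.
  have nzy : z != y by apply/negP => /eqP Ez; move: yW; rewrite -Ez Hz.
  by rewrite nzy.
have [Phi [CPhi HPhi]] := IH Q' (Elim y l) hn' (filter_uniq _ uQ) nxQ' Hw' Hv2 Ha2 HW2.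
exists Phi; split=> // D I e; rewrite -HPhi; split.
- move=> [e' [He Hs]]; exists (upd e' y (e y)); split.
    move=> z; rewrite mem_filter negb_and negbK /upd; case: eqP => [->//|/eqP nz] /= nzQ.
    by apply: He.
  apply/(Elim_sat I _ Hw ny); exists (e' y); apply/(lsat_ext I (e := e')) => // z _.
  by rewrite /upd; case: eqP => [->|].
- move=> [e'' [He Hs]]; move/(Elim_sat I _ Hw ny): Hs => [d Hd].
  exists (upd e'' y d); split=> // z nzQ; rewrite /upd; case: eqP => [Ez|_].
    by move: yQ nzQ; rewrite Ez => ->.
  by apply: He; rewrite mem_filter negb_and nzQ orbT.
Qed.

End Fin2.


Section ClaimA.
Variables (S : Type) (ar : S -> nat).
Hypothesis ar_le2 : forall R : S, ar R <= 2.
Notation form := (form ar).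
Notation lf := (lf ar).

Definition Rep (f : form) (L : seq nat) (l : lf) : Prop :=
  [/\ wfl l, {subset varsl l <= L}, avars l = [::] &
      forall D (I : forall R : S, ('I_(ar R) -> D) -> Prop) e, sat I e f <-> lsat I e l].

Lemma bodyrep x0 xs (U F : seq form) w1 w2 phi :
  w1 \in x0 :: xs -> w2 \in x0 :: xs ->
  (forall u, List.In u U -> exists l, Rep u (x0 :: xs) l) ->
  (forall a, List.In a F -> exists R (args : 'I_(ar R) -> nat),
      a = FAtom args /\ forall i, args i = w1 \/ args i = w2) ->
  BoolComb (fun g => List.In g U \/ List.In g F) phi ->
  exists psi, [/\ wfl psi, {subset varsl psi <= x0 :: xs}, {subset avars psi <= [:: w1; w2]} &
      forall D (I : forall R : S, ('I_(ar R) -> D) -> Prop) e, sat I e phi <-> lsat I e psi].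
Proof.
move=> iw1 iw2 HU HF; elim=> [g [gU|gF]|g _ [psi [W V A E]]|g h _ [pg [Wg Vg Ag Eg]] _ [ph [Wh Vh Ah Eh]]].
- have [l [W V A E]] := HU g gU; exists l; split=> //; by rewrite A.
- have [R [args [-> Hargs]]] := HF g gF; exists (LAt args); split=> //.
  + by move=> z /mapP [i _ ->]; case: (Hargs i) => ->.
  + by move=> z /mapP [i _ ->]; case: (Hargs i) => ->; rewrite !inE eqxx ?orbT.
- by exists (LNot psi); split=> // D I e /=; rewrite E.
- exists (LAnd pg ph); split=> //.
  + by move=> z /=; rewrite mem_cat => /orP[/Vg|/Vh].
  + by move=> z /=; rewrite mem_cat => /orP[/Ag|/Ah].
  + by move=> D I e /=; rewrite Eg Eh.
Qed.

Lemma block x0 xs (U : seq form) V F phi :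
  uniq (x0 :: xs) ->
  (forall u, List.In u U -> exists l, Rep u (x0 :: xs) l) ->
  {subset V <= x0 :: xs} ->
  (forall a, List.In a F -> uniform_atom V a) ->
  BoolComb (fun g => List.In g U \/ List.In g F) phi ->
  exists Phi, C2 Phi /\ forall D (I : forall R : S, ('I_(ar R) -> D) -> Prop) e,
     sat I e (exs xs phi) <-> sat I (fun _ => e x0) Phi.
Proof.
move=> Hu HU HV HF Hbc.
have [w1 [w2 [iw1 [iw2 HW]]]] := W_exists ar_le2 HV HF.
have [psi [Wp Vp Ap Ep]] := bodyrep iw1 iw2 HU HW Hbc.
case/andP: Hu => nx uxs.
have Wsub : {subset [:: w1; w2] <= x0 :: xs}.
  by move=> z; rewrite !inE => /orP[/eqP->|/eqP->].
have [Phi [CPhi HPhi]] := elimQ (W := [:: w1; w2]) (x0 := x0) (erefl _) (leqnn (size xs)) uxs nx Wp Vp Ap Wsub.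
exists Phi; split=> // D I e; rewrite -HPhi exs_sat.
by split=> -[e' [He Hs]]; exists e'; split=> //; apply/Ep.
Qed.

Lemma claimA : forall f : form, UF1eq f ->
  forall L : seq nat, {subset fv f <= L} -> exists l, Rep f L l.
Proof.
fix IH 2 => f H.
destruct H as [| |R args Hx|x y|f H|f g Hf Hg|x0 xs U V F phi Hu HU HV HF Hbc
               |x0 xs U V F phi Hu HU HV HF Hbc] => L HL.
- by exists (LFa ar); split.
- by exists (LT ar); split.
- case: Hx => x Hx.
  have Ha i : args i = x by apply/Hx; apply: in_atom_vars.
  exists (LOne (FAtom (fun _ : 'I_(ar R) => 0)) x); split=> //.
  + split=> //= z /mapP [i _ ->]; by rewrite inE.
  + move=> z; rewrite inE => /eqP ->; apply: HL; by apply/Hx.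
  + move=> D I e /=.
    by have -> : (fun i => e (args i)) = (fun _ => e x) by apply: functional_extensionality => i; rewrite Ha.
- by exists (LEq ar x y); split.
- have [l [W V A E]] := IH f H L HL; by exists (LNot l); split=> // D I e /=; rewrite E.
- have [lf1 [Wf Vf Af Ef]] := IH f Hf L (fun z Hz => HL z (ltac:(by rewrite /= mem_cat Hz))).
  have [lg [Wg Vg Ag Eg]] := IH g Hg L (fun z Hz => HL z (ltac:(by rewrite /= mem_cat Hz orbT))).
  exists (LAnd lf1 lg); split=> //=.
  + by move=> z; rewrite mem_cat => /orP[/Vf|/Vg].
  + by rewrite Af Ag.
  + by move=> D I e; rewrite Ef Eg.
- have HU' : forall u, List.In u U -> exists l, Rep u (x0 :: xs) l.
    move=> u hu; case: (HU u hu) => a b; exact: (IH u a (x0 :: xs) b).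
  have [Phi [CPhi HPhi]] := block Hu HU' HV HF Hbc.
  case: (boolP (x0 \in L)) => [xL|nxL].
    exists (LOne Phi x0); split=> //; try (by move=> z; rewrite inE => /eqP->).
  have nfv : x0 \notin fv (exs xs phi) by apply/negP => /HL; apply/negP.
  exists (LSen Phi); split=> // D I e /=; split.
    by move=> Hs; exists (e x0); rewrite -HPhi.
  move=> [d Hd].
  have : sat I (upd e x0 d) (exs xs phi).
    by apply/HPhi; rewrite /upd eqxx.
  apply: (proj1 (sat_fv I _)) => z Hz; rewrite /upd; case: eqP => // Ez.
  by move: nfv; rewrite -Ez Hz.
- have HU' : forall u, List.In u U -> exists l, Rep u (x0 :: xs) l.
    move=> u hu; case: (HU u hu) => a b; exact: (IH u a (x0 :: xs) b).
  have [Phi [CPhi HPhi]] := block Hu HU' HV HF Hbc.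
  exists (LSen Phi); split=> // D I e /=; split.
    by move=> [d Hd]; exists d; move: Hd; rewrite HPhi /upd eqxx.
  by move=> [d Hd]; exists d; rewrite HPhi /upd eqxx.
Qed.

Lemma part1 : le_logic (@UF1eq S ar) (@FOC2 S ar).
Proof.
move=> f Hf Hs.
have HL : {subset fv f <= [::]} by move=> z; rewrite Hs.
have [l [W V A E]] := claimA Hf HL.
have Vn : varsl l = [::] by case: (varsl l) V => // a s /(_ a (mem_head _ _)).
have [Cg1 Cg2] := trans2_C2 (fun _ => false) W.
exists (trans2 (fun _ => false) l); split; first by split=> //; exists 0, 1.
split; first exact: trans2_closed.
move=> D I e; rewrite E; apply: trans2_sat => // z; by rewrite Vn.
Qed.

End ClaimA.

Theorem mainTheorem8 (S : Type) (ar : S -> nat)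
  (ar_pos : forall R : S, 0 < ar R) (ar_le2 : forall R : S, ar R <= 2) :
  le_logic (@UF1eq S ar) (@FOC2 S ar) /\
  ((exists R : S, ar R = 2) -> ~ le_logic (@FOC2 S ar) (@UF1eq S ar)).
Proof.
split; [exact: (part1 ar_le2) | exact: (part2 ar_le2)].
Qed.
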